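(* Let $\Sigma$ be an $n$-simplex with vertices $a_1,\ldots,a_{n+1}$ in a real normed linear space $X$, let $1\le\nu\le n+1$, and let $F=\mathsf{co}\{a_j:1\le j\le n+1,\ j\neq\nu\}$ be the face of $\Sigma$ opposite $a_\nu$. Let $x=\sum_{k=1}^{n+1}\lambda_ka_k\in\Sigma$ with $\lambda\in\Delta_n$. Then $\rho(x,F)>0$ if and only if $\lambda_\nu>0$.
   Context: The setting is Bishop's constructive mathematics (intuitionistic logic). Vectors $v_1,\ldots,v_n$ are linearly independent if $\|\sum_i\mu_iv_i\|>0$ whenever $\sum_i|\mu_i|>0$; points $a_1,\ldots,a_{n+1}$ are affinely independent if $a_k-a_{n+1}$ ($1\le k\le n$) are linearly independent; the $n$-simplex with (affinely independent) vertices $a_1,\ldots,a_{n+1}$ is their convex hull. $\Delta_n=\{\lambda\in\mathbf{R}^{n+1}:\lambda_k\ge0,\sum_k\lambda_k=1\}$. $\rho(x,F)=\inf\{\|x-y\|:y\in F\}$. *)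

(* Defs.v *)
From HB Require Import structures.
From mathcomp Require Import all_boot all_order all_algebra.
From mathcomp Require Import all_classical all_reals all_analysis.
Set Implicit Arguments. Unset Strict Implicit. Unset Printing Implicit Defensive.
Import Order.TTheory GRing.Theory Num.Theory.
Import numFieldNormedType.Exports.
Local Open Scope classical_set_scope.
Local Open Scope ring_scope.

(* Vectors v_1..v_m are linearly independent (Bishop-style):
   ||sum mu_i v_i|| > 0 whenever sum |mu_i| > 0. *)
Definition lin_indep (R : realType) (X : normedModType R) (m : nat)
  (v : 'I_m -> X) : Prop :=
  forall mu : 'I_m -> R, 0 < \sum_(i < m) `|mu i| ->
    0 < `|\sum_(i < m) mu i *: v i|.

Definition aff_indep (R : realType) (X : normedModType R) (n : nat)
  (a : 'I_n.+1 -> X) : Prop :=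
  lin_indep (fun k : 'I_n => a (lift ord_max k) - a ord_max).

Definition Delta (R : realType) (n : nat) : set ('I_n.+1 -> R) :=
  [set lam | (forall k, 0 <= lam k) /\ \sum_(k < n.+1) lam k = 1].
Arguments Delta : clear implicits.

Definition co (R : realType) (X : normedModType R) (S : set X) : set X :=
  [set y | exists m (p : 'I_m -> X) (mu : 'I_m -> R),
      (forall i, S (p i)) /\ (forall i, 0 <= mu i) /\
      \sum_(i < m) mu i = 1 /\ y = \sum_(i < m) mu i *: p i].

Definition face (R : realType) (X : normedModType R) (n : nat)
  (a : 'I_n.+1 -> X) (nu : 'I_n.+1) : set X :=
  co [set a j | j in [set j | j != nu]].

Definition rho (R : realType) (X : normedModType R) (x : X) (F : set X) : R :=
  inf [set `|x - y| | y in F].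

(* Main.v *)
Require Import Defs.
From HB Require Import structures.
From mathcomp Require Import all_boot all_order all_algebra.
From mathcomp Require Import all_classical all_reals all_analysis.
Import Order.TTheory GRing.Theory Num.Theory.
Import numFieldNormedType.Exports.
Local Open Scope classical_set_scope.
Local Open Scope ring_scope.
Lemma sum_cont (R : realType) (V : normedModType R) (T : topologicalType) m
  (F : 'I_m -> T -> V) : (forall i, continuous (F i)) ->
  continuous (fun t => \sum_(i < m) F i t).
Proof.
move=> Fc x.
rewrite /continuous_at. elim: (index_enum _) => [|i r IH].

  under eq_cvg do rewrite big_nil. rewrite big_nil; exact: cvg_cst.
under eq_cvg do rewrite big_cons. rewrite big_cons.
by apply: (@continuousD _ _ _ (F i) (fun t => \big[+%R/0]_(j <- r) F j t)); [exact: Fc| exact: IH].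
Qed.

Lemma unif_bound (R : realType) (X : normedModType R) m (v : 'I_m -> X) :
  lin_indep v -> exists2 c : R, 0 < c &
    forall mu : 'I_m -> R, c * \sum_(i < m) `|mu i| <= `|\sum_(i < m) mu i *: v i|.
Proof.
case: m v => [|m] v li.
  by exists 1 => // mu; rewrite !big_ord0 mulr0.
pose S := [set u : 'rV[R]_m.+1 | \sum_(i < m.+1) `|u ord0 i| = 1].
pose f := fun u : 'rV[R]_m.+1 => `|\sum_(i < m.+1) u ord0 i *: v i|.
have fc : continuous f.
  move=> u; apply: continuous_comp; last exact: norm_continuous.
  apply: (@sum_cont R X _ _ (fun i (u : 'rV[R]_m.+1) => u ord0 i *: v i)) => i w.
  apply: continuousZr_tmp; exact: coord_continuous.
have gc : continuous (fun u : 'rV[R]_m.+1 => \sum_(i < m.+1) `|u ord0 i|).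
  apply: (@sum_cont R R^o _ _ (fun i (u : 'rV[R]_m.+1) => `|u ord0 i| : R^o)) => i w.
  apply: continuous_comp; [exact: coord_continuous| exact: norm_continuous].
have Scl : closed S.
  have -> : S = (fun u : 'rV[R]_m.+1 => \sum_(i < m.+1) `|u ord0 i|) @^-1` [set 1] by [].
  apply: preimage_closed.
    by move=> ? _; exact: gc.
  exact: closed_eq.
have Sb : bounded_set S.
  exists 1; split; first exact: num_real.
  move=> M M1 u Su.
  apply: (@le_trans _ _ 1); last exact: ltW.
  rewrite /Num.norm/= mx_normrE; apply/bigmax_leP; split => // -[i j] _ /=.
  rewrite ord1 -Su (bigD1 j) //= lerDl; exact: sumr_ge0.
have Sc : compact S by exact: bounded_closed_compact.
have fpos : forall u, S u -> 0 < f u.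
  move=> u Su; apply: li; by rewrite Su.
have hc : {within S, continuous (fun u => (f u)^-1)}.
  apply: continuous_in_subspaceT => u; rewrite inE => Su.
  apply: continuousV; first by rewrite gt_eqF // fpos.
  exact: fc.
have := compact_bounded (continuous_compact hc Sc).
case=> M [Mr HM].
have K0 : 0 < `|M| + 1 by rewrite ltr_wpDl.
have HK := HM (`|M| + 1) (le_lt_trans (real_ler_norm Mr) (ltr_pwDr ltr01 (lexx _))).
exists (`|M| + 1)^-1; first by rewrite invr_gt0.
move=> mu; set s := \sum_(i < m.+1) `|mu i|.
have s0 : 0 <= s by apply: sumr_ge0.
have [->|sne0] := eqVneq s 0; first by rewrite mulr0.
have sp : 0 < s by rewrite lt_def sne0.
pose u : 'rV[R]_m.+1 := \row_i (mu i / s).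
have Su : S u.
  rewrite /S /u /=; under eq_bigr do rewrite mxE normrM (gtr0_norm (x := s^-1)) ?invr_gt0 //.
  by rewrite -mulr_suml mulfV.
have fu : f u = s^-1 * `|\sum_(i < m.+1) mu i *: v i|.
  rewrite /f /u; under eq_bigr do rewrite mxE mulrC -scalerA.
  by rewrite -scaler_sumr normrZ gtr0_norm ?invr_gt0.
have := HK _ (ex_intro2 _ _ u Su erefl).
have := fpos u Su; rewrite fu => fp.
rewrite /= gtr0_norm ?invr_gt0 // invfM invrK => H.
rewrite ler_pdivrMl // mulrC.
have Np : 0 < `|\sum_(i < m.+1) mu i *: v i| by move: fp; rewrite pmulr_rgt0 ?invr_gt0.
by rewrite -ler_pdivrMl // mulrC.
Qed.
Lemma face_coef (R : realType) (X : normedModType R) (n : nat)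
  (a : 'I_n.+1 -> X) (nu : 'I_n.+1) (y : X) : face a nu y ->
  exists beta : 'I_n.+1 -> R, beta nu = 0 /\ \sum_k beta k = 1 /\
     y = \sum_k beta k *: a k.
Proof.
case=> m [p [mu [Sp [_ [s1 ->]]]]].
have /all_sig [j Hj] : forall i, {j : 'I_n.+1 | (j != nu) && (p i == a j)}.
  move=> i; apply: cid; case: (Sp i) => j /= jn <-; exists j; by rewrite jn eqxx.
exists (fun k => \sum_(i < m | j i == k) mu i); split; [|split].
- apply: big_pred0 => i; apply/negbTE; by case/andP: (Hj i).
- by rewrite -s1 [RHS](partition_big j predT).
- under [RHS]eq_bigr do rewrite scaler_suml.
  have -> : \sum_(i < m) mu i *: p i = \sum_(i < m) mu i *: a (j i).
    by apply: eq_bigr => i _; case/andP: (Hj i) => _ /eqP ->.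
  rewrite [LHS](partition_big j predT) //=.
  apply: eq_bigr => k _; apply: eq_bigr => i /eqP <- //.
Qed.
Lemma bigD1max (V : zmodType) n (F : 'I_n.+1 -> V) :
  \sum_(k < n.+1) F k = F ord_max + \sum_(k < n) F (lift ord_max k).
Proof. by rewrite (bigD1_ord ord_max). Qed.

Lemma rep0 (R : realType) (X : normedModType R) (n : nat)
  (a : 'I_n.+1 -> X) (beta : 'I_n.+1 -> R) : \sum_k beta k = 0 ->
  \sum_k beta k *: a k =
  \sum_(k < n) beta (lift ord_max k) *: (a (lift ord_max k) - a ord_max).
Proof.
move=> s0.
have hm : beta ord_max = - \sum_(k < n) beta (lift ord_max k).
  by apply/eqP; rewrite -addr_eq0 -bigD1max s0.
rewrite bigD1max hm scaleNr scaler_suml.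
under [RHS]eq_bigr do rewrite scalerBr.
by rewrite sumrB addrC.
Qed.

Lemma sum_half (R : realType) (n : nat) (beta : 'I_n.+1 -> R) (nu : 'I_n.+1) :
  \sum_k beta k = 0 ->
  `|beta nu| <= 2 * \sum_(k < n) `|beta (lift ord_max k)|.
Proof.
move=> s0.
have h1 : `|beta nu| <= \sum_k `|beta k|.
  by rewrite (bigD1 nu) //= lerDl sumr_ge0.
have h2 : `|beta ord_max| <= \sum_(k < n) `|beta (lift ord_max k)|.
  have hm : beta ord_max = - \sum_(k < n) beta (lift ord_max k).
    by apply/eqP; rewrite -addr_eq0 -bigD1max s0.
  by rewrite hm normrN ler_norm_sum.
apply: (le_trans h1); rewrite bigD1max -[2]/(1 + 1) mulrDl mul1r lerD2r.
exact: h2.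
Qed.

Theorem corollary16 (R : realType) (X : normedModType R) (n : nat)
  (a : 'I_n.+1 -> X) (nu : 'I_n.+1) (lam : 'I_n.+1 -> R) (x : X) :
  (0 < n)%N -> aff_indep a -> lam \in Delta R n ->
  x = \sum_(k < n.+1) lam k *: a k ->
  (0 < rho x (face a nu) <-> 0 < lam nu).
Proof.
move=> n0 ai; rewrite inE => -[lam0 lam1] xE.
have [c c0 Hc] := @unif_bound R X n _ ai.
pose E := [set `|x - y| | y in face a nu].
have Fne : exists y, face a nu y.
  pose j : 'I_n.+1 := if nu == ord0 then ord_max else ord0.
  have jn : j != nu.
    rewrite /j; case: (eqVneq nu ord0) => [->|ne]; last by rewrite eq_sym.
    by apply/eqP => /(congr1 val) /=; move: n0; case: (n).
  exists (a j), 1%N, (fun _ => a j), (fun _ => 1); split.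
    by move=> _; exists j.
  split; first by move=> _; exact: ler01.
  by rewrite !big_ord1 scale1r.
have lb0 : lbound E 0 by move=> _ [y _ <-]; exact: normr_ge0.
split.
- move=> rp; rewrite lt_def lam0 andbT; apply/negP => /eqP l0.
  have xF : face a nu x.
    exists n, (fun k => a (lift nu k)), (fun k => lam (lift nu k)); split.
      by move=> k; exists (lift nu k) => //=; rewrite eq_sym neq_lift.
    split; first by move=> k; exact: lam0.
    split.
      by move: lam1; rewrite (bigD1_ord nu) //= l0 add0r.
    by rewrite xE (bigD1_ord nu) //= l0 scale0r add0r.
  have E0 : E 0 by exists x => //; rewrite subrr normr0.
  have := ge_inf (ex_intro _ 0 lb0) E0.
  rewrite /rho in rp => h.
  by have := lt_le_trans rp h; rewrite ltxx.
- move=> lp.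
  apply: (@lt_le_trans _ _ (c * lam nu / 2)); first by rewrite divr_gt0 ?mulr_gt0.
  apply: lb_le_inf.
    by case: Fne => y Fy; exists `|x - y|; exists y.
  move=> _ [y Fy <-]; have [beta [bnu [b1 ->]]] := @face_coef R X n a nu _ Fy.
  pose gam k := lam k - beta k.
  have -> : x - \sum_k beta k *: a k = \sum_k gam k *: a k.
    by rewrite xE -sumrB; apply: eq_bigr => k _; rewrite scalerBl.
  have g0 : \sum_k gam k = 0 by rewrite sumrB lam1 b1 subrr.
  rewrite rep0 //.
  apply: le_trans (Hc _).
  have := @sum_half R n gam nu g0; rewrite /gam bnu subr0 ger0_norm // => h.
  by rewrite -mulrA ler_pM2l // ler_pdivrMr // mulrC.
Qed.
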